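(* Let $S$ be a Hausdorff semitopological semigroup which is an orthogonal sum $S=\sum_{i\in\mathscr I}B^0_{\lambda_i}(S_i)$ of topological Brandt $\lambda_i^0$-extensions of semitopological monoids $S_i$ with zeros. Then for every $i\in\mathscr I$, all $\alpha_i,\beta_i\in\lambda_i$ and every non-zero element $(\alpha_i,g_i,\beta_i)\in (S_i)_{\alpha_i,\beta_i}$ there exists an open neighbourhood $U$ of $(\alpha_i,g_i,\beta_i)$ in $S$ with $U\subseteq (S_i)^*_{\alpha_i,\beta_i}$. Consequently every set $(S_i)^*_{\alpha_i,\beta_i}$ is open in $S$.
   Context: All topological spaces are Hausdorff. A semitopological semigroup is a Hausdorff space with a separately continuous associative operation. For a semigroup $T$ with zero $0_T$ and a cardinal $\lambda\ge1$, the Brandt $\lambda^0$-extension $B^0_\lambda(T)$ is the set $(\lambda\times (T\setminus\{0_T\})\times\lambda)\cup\{0\}$ with multiplication $(\alpha,a,\beta)(\gamma,b,\delta)=(\alpha,ab,\delta)$ if $\beta=\gamma$ and $ab\ne0_T$, and $=0$ otherwise, with $0$ a zero. For $A\subseteq T$ and $\alpha,\beta\in\lambda$, $A_{\alpha,\beta}=\{(\alpha,s,\beta):s\in A\setminus\{0_T\}\}\cup\{0\}$ if $0_T\in A$, and $A_{\alpha,\beta}=\{(\alpha,s,\beta):s\in A\}$ otherwise; for a subset $B$ of a semigroup with zero, $B^*=B\setminus\{0\}$. If $T$ is a semitopological monoid with zero, a topological Brandt $\lambda^0$-extension of $T$ is $B^0_\lambda(T)$ with a topology making it a semitopological semigroup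 such that for some $\alpha\in\lambda$ the map $s\mapsto(\alpha,s,\alpha)$ ($0_T\mapsto 0$) is a homeomorphism of $T$ onto the subspace $T_{\alpha,\alpha}$. The orthogonal sum $\sum_{\iota}T_\iota$ of a disjoint family of semigroups $T_\iota$ with zeros is the set $\{0\}\cup\bigcup_\iota T_\iota^*$ where $st$ is the product in $T_\iota$ if $s,t\in T_\iota^*$ and this product is non-zero, and $st=0$ otherwise. *)

(* Defs.v *)
From Stdlib Require Import Classical ClassicalEpsilon.
Set Implicit Arguments.

Record topology (X : Type) := Topology {
  open : (X -> Prop) -> Prop;
  open_full : open (fun _ => True);
  open_inter : forall U V, open U -> open V -> open (fun x => U x /\ V x);
  open_union : forall F : (X -> Prop) -> Prop,
      (forall U, F U -> open U) -> open (fun x => exists U, F U /\ U x)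
}.
Arguments open {X} t U.

Definition hausdorff {X} (t : topology X) : Prop :=
  forall x y : X, x <> y -> exists U V, open t U /\ open t V /\ U x /\ V y /\
     (forall z, U z -> V z -> False).

Definition continuous {X Y} (tX : topology X) (tY : topology Y) (f : X -> Y) :=
  forall V, open tY V -> open tX (fun x => V (f x)).

Definition embedding {X Y} (tX : topology X) (tY : topology Y) (f : X -> Y) :=
  (forall x x', f x = f x' -> x = x') /\ continuous tX tY f /\
  (forall U, open tX U -> exists V, open tY V /\ forall x, U x <-> V (f x)).

Definition semitopological_semigroup {X} (t : topology X) (op : X -> X -> X) :=
  hausdorff t /\ (forall a b c, op a (op b c) = op (op a b) c) /\
  (forall a, continuous t t (fun x => op a x)) /\
  (forall a, continuous t t (fun x => op x a)).

Record STMonoidZero := {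
  carrier :> Type;
  mulm : carrier -> carrier -> carrier;
  zerom : carrier;
  onem : carrier;
  topm : topology carrier;
  mulm_assoc : forall a b c, mulm a (mulm b c) = mulm (mulm a b) c;
  mulm_1x : forall a, mulm onem a = a;
  mulm_x1 : forall a, mulm a onem = a;
  mulm_0x : forall a, mulm zerom a = zerom;
  mulm_x0 : forall a, mulm a zerom = zerom;
  mulm_semitop : semitopological_semigroup topm mulm
}.

(** Carrier: [None] is the common zero, [Some (existT i p)] is the non-zero
    element (alpha, s, beta) of B^0_{L i}(M i), with s <> 0 in M i. *)
Section OSum.
Variables (I : Type) (L : I -> Type) (M : I -> STMonoidZero).

Record NZ (i : I) := MkNZ {
  nz_a : L i; nz_s : M i; nz_b : L i; nz_ne : nz_s <> zerom (M i) }.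

Definition OSum := option {i : I & NZ i}.

Definition osum_mul (x y : OSum) : OSum :=
  match x, y with
  | Some (existT _ i p), Some (existT _ j q) =>
    match excluded_middle_informative (i = j) with
    | left e =>
      let q' : NZ i := eq_rect_r NZ q e in
      match excluded_middle_informative (nz_b p = nz_a q') with
      | left _ =>
        match excluded_middle_informative
                (mulm (M i) (nz_s p) (nz_s q') = zerom (M i)) with
        | left _ => None
        | right h => Some (existT NZ i (@MkNZ i (nz_a p) _ (nz_b q') h))
        end
      | right _ => None
      end
    | right _ => None
    end
  | _, _ => None
  end.

Definition brandt_diag (i : I) (alpha : L i) (s : M i) : OSum :=
  match excluded_middle_informative (s = zerom (M i)) with
  | left _ => None
  | right h => Some (existT NZ i (@MkNZ i alpha s alpha h))
  end.

Definition brandt_elt (i : I) (alpha beta : L i) (g : M i)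
  (hg : g <> zerom (M i)) : OSum :=
  Some (existT NZ i (@MkNZ i alpha g beta hg)).

Definition cell_star (i : I) (alpha beta : L i) (y : OSum) : Prop :=
  exists p : NZ i, y = Some (existT NZ i p) /\ nz_a p = alpha /\ nz_b p = beta.

End OSum.

(* Main.v *)
Require Import Defs.
From Stdlib Require Import Classical ClassicalEpsilon FunctionalExtensionality PropExtensionality Eqdep.

Section Aux.
Variables (I : Type) (L : I -> Type) (M : I -> STMonoidZero).

Lemma mkNZ_eq (i : I) (a b : L i) (s s' : M i) (h : s <> zerom (M i)) (h' : s' <> zerom (M i)) :
  s = s' -> MkNZ L M i a b h = MkNZ L M i a b h'.
Proof. intros ->. f_equal. apply proof_irrelevance. Qed.

Lemma mul_eq (i : I) (p q : NZ L M i) (e : nz_b p = nz_a q)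
  (h : mulm (M i) (nz_s p) (nz_s q) <> zerom (M i)) :
  osum_mul (Some (existT (NZ L M) i p)) (Some (existT (NZ L M) i q)) =
  Some (existT (NZ L M) i (MkNZ L M i (nz_a p) (nz_b q) h)).
Proof.
  unfold osum_mul.
  destruct (excluded_middle_informative (i = i)) as [e0|n]; [|contradiction].
  rewrite (proof_irrelevance _ e0 eq_refl). cbn.
  destruct (excluded_middle_informative (nz_b p = nz_a q)); [|contradiction].
  destruct (excluded_middle_informative (mulm (M i) (nz_s p) (nz_s q) = zerom (M i)));
    [contradiction|].
  do 3 f_equal. apply proof_irrelevance.
Qed.

Lemma mul_spec (x y : OSum L M) : osum_mul x y <> None ->
  exists i (p q : NZ L M i), x = Some (existT _ i p) /\ y = Some (existT _ i q) /\
   nz_b p = nz_a q /\ exists h : mulm (M i) (nz_s p) (nz_s q) <> zerom (M i),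
   osum_mul x y = Some (existT (NZ L M) i (MkNZ L M i (nz_a p) (nz_b q) h)).
Proof.
  intro H.
  destruct x as [[i p]|]; [|simpl in H; congruence].
  destruct y as [[j q]|]; [|simpl in H; destruct p; congruence].
  destruct (classic (i = j)) as [e|n].
  - subst j. exists i, p, q. split; [reflexivity|]. split; [reflexivity|].
    destruct (classic (nz_b p = nz_a q)) as [e|n].
    + split; [exact e|].
      destruct (classic (mulm (M i) (nz_s p) (nz_s q) = zerom (M i))) as [z|nz].
      * exfalso; apply H. unfold osum_mul.
        destruct (excluded_middle_informative (i = i)) as [e0|n]; [|reflexivity].
        rewrite (proof_irrelevance _ e0 eq_refl). cbn.
        destruct (excluded_middle_informative (nz_b p = nz_a q)); [|reflexivity].
        destruct (excluded_middle_informative (mulm (M i) (nz_s p) (nz_s q) = zerom (M i)));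
          [reflexivity|contradiction].
      * exists nz. apply mul_eq; assumption.
    + exfalso; apply H. unfold osum_mul.
      destruct (excluded_middle_informative (i = i)) as [e0|n']; [|reflexivity].
      rewrite (proof_irrelevance _ e0 eq_refl). cbn.
      destruct (excluded_middle_informative (nz_b p = nz_a q)); [contradiction|reflexivity].
  - exfalso; apply H. unfold osum_mul.
    destruct (excluded_middle_informative (i = j)); [contradiction|reflexivity].
Qed.

Lemma one_ne (i : I) (g : M i) : g <> zerom (M i) -> onem (M i) <> zerom (M i).
Proof.
  intros hg e. apply hg. rewrite <- (mulm_1x (M i) g), e. apply mulm_0x.
Qed.

End Aux.

Theorem proposition2p2 (I : Type) (L : I -> Type) (M : I -> STMonoidZero)
  (tau : topology (@OSum I L M))
  (HS : semitopological_semigroup tau (@osum_mul I L M))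
  (Hbrandt : forall i : I, exists alpha : L i,
      embedding (topm (M i)) tau (@brandt_diag I L M i alpha)) :
  (forall (i : I) (alpha beta : L i) (g : M i) (hg : g <> zerom (M i)),
     exists U : @OSum I L M -> Prop,
       open tau U /\ U (@brandt_elt I L M i alpha beta g hg) /\
       (forall y, U y -> @cell_star I L M i alpha beta y)) /\
  (forall (i : I) (alpha beta : L i), open tau (@cell_star I L M i alpha beta)).
Proof.
  destruct HS as [Hh [_ [Hl Hr]]].
  assert (P1 : forall (i : I) (alpha beta : L i) (g : M i) (hg : g <> zerom (M i)),
     exists U : @OSum I L M -> Prop,
       open tau U /\ U (@brandt_elt I L M i alpha beta g hg) /\
       (forall y, U y -> @cell_star I L M i alpha beta y)).
  { intros i alpha beta g hg.
    pose proof (@one_ne I M i g hg) as h1.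
    set (ea := brandt_elt L M i alpha alpha h1).
    set (eb := brandt_elt L M i beta beta h1).
    set (x := brandt_elt L M i alpha beta hg).
    assert (Hx : x <> None) by discriminate.
    destruct (Hh x None Hx) as [U [V [oU [oV [Ux [VN dUV]]]]]].
    exists (fun y => U (osum_mul (osum_mul ea y) eb)).
    split; [|split].
    - apply (Hl ea (fun z => U (osum_mul z eb))). apply (Hr eb U). exact oU.
    - assert (h2 : mulm (M i) (onem (M i)) g <> zerom (M i))
        by (rewrite mulm_1x; exact hg).
      assert (h3 : mulm (M i) (mulm (M i) (onem (M i)) g) (onem (M i)) <> zerom (M i))
        by (rewrite mulm_x1; exact h2).
      unfold ea, x, brandt_elt.
      rewrite (@mul_eq I L M i (MkNZ L M i alpha alpha h1) (MkNZ L M i alpha beta hg)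
                 eq_refl h2).
      cbn [nz_a nz_b nz_s]. unfold eb, brandt_elt.
      rewrite (@mul_eq I L M i (MkNZ L M i alpha beta h2) (MkNZ L M i beta beta h1)
                 eq_refl h3).
      cbn. replace (MkNZ L M i alpha beta h3) with (MkNZ L M i alpha beta hg); [exact Ux|].
      apply mkNZ_eq. rewrite mulm_x1, mulm_1x. reflexivity.
    - intros y Uy.
      assert (Hn : osum_mul (osum_mul ea y) eb <> None)
        by (intro e; rewrite e in Uy; exact (dUV None Uy VN)).
      destruct (@mul_spec I L M _ _ Hn) as [i1 [p1 [q1 [E1 [E2 [E3 [h E4]]]]]]].
      assert (Hn2 : osum_mul ea y <> None) by (rewrite E1; discriminate).
      destruct (@mul_spec I L M _ _ Hn2) as [i0 [p0 [q0 [F1 [F2 [F3 [h' F4]]]]]]].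
      unfold ea, brandt_elt in F1. injection F1 as F1a F1b.
      subst i0. apply inj_pair2 in F1b. subst p0.
      rewrite F4 in E1. injection E1 as E1a E1b. subst i1. apply inj_pair2 in E1b.
      subst p1. unfold eb, brandt_elt in E2. injection E2 as E2b.
      apply inj_pair2 in E2b. subst q1.
      exists q0. simpl in *. split; [exact F2|]. split; [symmetry; exact F3|exact E3]. }
  split; [exact P1|].
  intros i alpha beta.
  set (F := fun U : OSum L M -> Prop => open tau U /\ forall y, U y -> cell_star i alpha beta y).
  assert (E : (fun x => exists U, F U /\ U x) = cell_star i alpha beta).
  { apply functional_extensionality; intro y. apply propositional_extensionality. split.
    - intros [U [[_ HU] Uy]]. exact (HU y Uy).
    - intros [p [-> [<- <-]]]. destruct p as [a s b hs]. simpl.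
      destruct (P1 i a b s hs) as [U [oU [Ux HU]]].
      exists U. split; [split; assumption|exact Ux]. }
  rewrite <- E. apply open_union. intros U [oU _]. exact oU.
Qed.
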